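(* Let $(\mathcal{C},\mathcal{B},Q,S)$ be an STV election, counted by the procedure described in the context, and let $w\neq l$ be candidates. If $L_{\mathrm{basic}}(w)>U_{\mathrm{comp}}(l,w)$ (the assertion $\mathsf{AG}(w,l)$), then $l$ cannot be seated when $w$ is not seated.
   Context: An STV election is a tuple $(\mathcal{C},\mathcal{B},Q,S)$ where $\mathcal{C}$ is a finite set of candidates, $\mathcal{B}$ is a multiset of ballots (each ballot is a finite sequence of distinct candidates, in order of preference, most preferred first, not necessarily containing all candidates), $S$ is the number of seats, and $Q=\lfloor |\mathcal{B}|/(S+1)\rfloor+1$ is the quota. For a sequence $\pi$, $\mathrm{first}(\pi)$ is its first element, and for a set $X$ of candidates, $\sigma_X(\pi)$ is the subsequence of $\pi$ consisting of the elements of $X$, in their original order. Counting: every ballot starts with value $1$ and is placed in the pile of its first-ranked candidate; a candidate's tally is the total value of the ballots in its pile. A candidate is eligible if neither eliminated nor seated. In each round every eligible candidate with tally at least $Q$ is seated (gets a quota), and the ballots in its pile get a reduced transfer value (e.g. unweighted Gregory: $(V_c-Q)/|\mathcal{B}_c|$, with $V_c$ the total value and $|\mathcal{B}_c|$ the number of ballots in its pile) and move to the next-ranked eligible candidate on each ballot (or are exhausted). If no candidate reaches a quota, the eligible candidate with smallest tally is eliminated and its ballots move at their current value to their next-ranked eligible candidate (or are exhausted). Counting stops when all $S$ seats are filled or the number of eligible candidates equals the number of unfilled seats, in which case all remaining eligible candidates are seated. ''Seated'' covers both ways of obtaining a seat. Definitions: $L_{\mathrm{basic}}(c)=|\{\beta\in\mathcal{B}:\mathrm{first}(\beta)=c\}|$;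 $U_{\mathrm{comp}}(c,c')=|\{\beta\in\mathcal{B}:\mathrm{first}(\sigma_{\{c,c'\}}(\beta))=c\}|$, counted with multiplicity. *)

(* Defs.v *)
From HB Require Import structures.
From mathcomp Require Import all_boot all_order all_algebra.
Set Implicit Arguments. Unset Strict Implicit. Unset Printing Implicit Defensive.
Import Order.TTheory GRing.Theory Num.Theory.

(* A ballot is a sequence of candidates (required distinct in the theorem);
   the multiset of ballots is a seq of ballots (multiplicity = repetition). *)
Definition ballot (C : finType) := seq C.

(* State of the count: seated set, eliminated set, and, for each ballot
   (parallel to the ballot list), its current pile (None = exhausted)
   and its current value. *)
Record stv_state (C : finType) := STVState {
  seated : {set C};
  elim   : {set C};
  piles  : seq (option C * rat) }.

Definition eligible (C : finType) (st : stv_state C) : {set C} :=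
  ~: (seated st :|: elim st).

Definition quota (C : finType) (B : seq (ballot C)) (S : nat) : nat :=
  (size B %/ S.+1).+1.

Definition tally (C : finType) (st : stv_state C) (c : C) : rat :=
  (\sum_(p <- piles st | p.1 == Some c) p.2)%R.

Definition pile_size (C : finType) (st : stv_state C) (c : C) : nat :=
  count (fun p : option C * rat => p.1 == Some c) (piles st).

Definition next_cand (C : finType) (b : ballot C) (c : C) (E : {set C})
  : option C :=
  ohead [seq x <- drop (index c b).+1 b | x \in E].

Definition initial_state (C : finType) (B : seq (ballot C)) : stv_state C :=
  STVState set0 set0 [seq (ohead b, 1%R : rat) | b <- B].

Definition quota_set (C : finType) (B : seq (ballot C)) (S : nat)
  (st : stv_state C) : {set C} :=
  [set c in eligible st | ((quota B S)%:R <= tally st c)%R].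

(* seating round, unweighted Gregory transfer value (V_c - Q)/|B_c| *)
Definition seat_round (C : finType) (B : seq (ballot C)) (S : nat)
  (st : stv_state C) : stv_state C :=
  let W := quota_set B S st in
  let E' := eligible st :\: W in
  STVState (seated st :|: W) (elim st)
    [seq match bp.2.1 with
         | Some c =>
             if c \in W then
               (next_cand bp.1 c E',
                ((tally st c - (quota B S)%:R) / (pile_size st c)%:R)%R)
             else bp.2
         | None => bp.2
         end
    | bp <- zip B (piles st)].

Definition elim_round (C : finType) (B : seq (ballot C))
  (st : stv_state C) (e : C) : stv_state C :=
  let E' := eligible st :\ e in
  STVState (seated st) (e |: elim st)
    [seq match bp.2.1 with
         | Some c => if c == e then (next_cand bp.1 c E', bp.2.2) else bp.2
         | None => bp.2
         end
    | bp <- zip B (piles st)].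

(* One step of the count (nondeterministic only in the choice among
   eligible candidates of smallest tally). The count continues only while
   fewer than S seats are filled. *)
Inductive stv_step (C : finType) (B : seq (ballot C)) (S : nat)
  : stv_state C -> stv_state C -> Prop :=
| StepFinal st :
    #|seated st| < S ->
    #|eligible st| = S - #|seated st| ->
    stv_step B S st (STVState (seated st :|: eligible st) (elim st) (piles st))
| StepSeat st :
    #|seated st| < S ->
    #|eligible st| <> S - #|seated st| ->
    quota_set B S st != set0 ->
    stv_step B S st (seat_round B S st)
| StepElim st e :
    #|seated st| < S ->
    #|eligible st| <> S - #|seated st| ->
    quota_set B S st = set0 ->
    e \in eligible st ->
    (forall c, c \in eligible st -> (tally st e <= tally st c)%R) ->
    stv_step B S st (elim_round B st e).

Inductive stv_reachable (C : finType) (B : seq (ballot C)) (S : nat)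
  : stv_state C -> Prop :=
| ReachInit : stv_reachable B S (initial_state B)
| ReachStep st st' :
    stv_reachable B S st -> stv_step B S st st' -> stv_reachable B S st'.

Definition L_basic (C : finType) (B : seq (ballot C)) (c : C) : nat :=
  count (fun b : ballot C => ohead b == Some c) B.

Definition U_comp (C : finType) (B : seq (ballot C)) (c c' : C) : nat :=
  count (fun b : ballot C => ohead [seq x <- b | x \in [:: c; c']] == Some c) B.

(* Main.v *)
From Pilot Require Import Defs.
From mathcomp Require Import all_boot all_order all_algebra.
Set Implicit Arguments. Unset Strict Implicit. Unset Printing Implicit Defensive.
Import Order.TTheory GRing.Theory Num.Theory.
Import Pilot.Defs.
Local Open Scope ring_scope.

Lemma ohead_filter_split (T : eqType) (P : pred T) d c' :
  ohead (filter P d) = Some c' -> exists t s', d = t ++ c' :: s' /\ all (predC P) t.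
Proof.
elim: d => [|x d IH] //=.
case: ifP => Px /=.
  by case=> <-; exists [::], d.
move/IH=> [t [s' [-> Ht]]]; exists (x :: t), s'; split=> //=.
by rewrite Px Ht.
Qed.

Lemma take_index_sub (T : eqType) (pre s : seq T) c x :
  x \in take (index c (pre ++ c :: s)) (pre ++ c :: s) -> x \in pre.
Proof.
rewrite index_cat take_cat.
case: ifP => cp; first exact: mem_take.
case: (boolP (c \in pre)) cp => h; first by rewrite index_mem h.
by rewrite /= eqxx addn0 subnn take0 cats0.
Qed.

Lemma next_cand_split (C : finType) (b : ballot C) c c' pre s (E E' : {set C}) :
  b = pre ++ c :: s -> all (fun x => x \notin E) pre -> E' \subset E ->
  c \notin E' -> next_cand b c E' = Some c' ->
  exists pre' s', b = pre' ++ c' :: s' /\ all (fun x => x \notin E') pre'.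
Proof.
move=> hb hpre sub cE' /ohead_filter_split [t [s' [hd ht]]].
have cb : c \in b by rewrite hb mem_cat mem_head orbT.
have eb : b = take (index c b) b ++ c :: drop (index c b).+1 b.
  have h := drop_nth c (etrans (index_mem c b) cb).
  rewrite nth_index // in h.
  by rewrite -h cat_take_drop.
exists (take (index c b) b ++ c :: t), s'; split.
  by rewrite -catA /= -hd.
rewrite all_cat /= cE' /=; apply/andP; split.
  apply/allP=> x hx; have hxp : x \in pre by apply: (@take_index_sub _ pre s c x); rewrite -hb.
  move/allP: hpre => /(_ x hxp) xE; apply/negP=> xE'.
  by move/negP: xE; apply; apply: (subsetP sub).
exact: ht.
Qed.

Lemma sum_le_count (C : finType) (bs : seq (ballot C)) (ps : seq (option C * rat))
  (P : pred (ballot C)) c :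
  size bs = size ps ->
  (forall bp, bp \in zip bs ps -> 0 <= bp.2.2) ->
  (forall bp, bp \in zip bs ps -> bp.2.1 = Some c -> P bp.1 /\ bp.2.2 <= 1) ->
  \sum_(p <- ps | p.1 == Some c) p.2 <= (count P bs)%:R.
Proof.
elim: bs ps => [|b bs IH] [|p ps] //=; first by rewrite big_nil.
move=> [hs] h0 h1; rewrite big_cons natrD.
have sub bp : bp \in zip bs ps -> bp \in (b,p) :: zip bs ps by move=> hb; rewrite in_cons hb orbT.
have IH' := IH ps hs (fun bp hb => h0 bp (sub bp hb))
   (fun bp hb => h1 bp (sub bp hb)).
case: eqP => hp.
  have [-> v1] := h1 (b, p) (mem_head _ _) hp.
  exact: lerD.
by apply: ler_wpDl.
Qed.

Lemma count_le_sum (C : finType) (bs : seq (ballot C)) (ps : seq (option C * rat))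
  (P : pred (ballot C)) c :
  size bs = size ps ->
  (forall bp, bp \in zip bs ps -> 0 <= bp.2.2) ->
  (forall bp, bp \in zip bs ps -> P bp.1 -> bp.2 = (Some c, 1)) ->
  (count P bs)%:R <= \sum_(p <- ps | p.1 == Some c) p.2.
Proof.
elim: bs ps => [|b bs IH] [|p ps] //=; first by rewrite big_nil.
move=> [hs] h0 h1; rewrite big_cons natrD.
have sub bp : bp \in zip bs ps -> bp \in (b,p) :: zip bs ps by move=> hb; rewrite in_cons hb orbT.
have IH' := IH ps hs (fun bp hb => h0 bp (sub bp hb))
   (fun bp hb => h1 bp (sub bp hb)).
case Pb: (P b).
  have /= -> := h1 (b, p) (mem_head _ _) Pb.
  by rewrite /= eqxx; apply: lerD.
rewrite add0r; case: ifP => _ //.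
apply: ler_wpDl => //; exact: (h0 (b, p) (mem_head _ _)).
Qed.

Lemma sum_le_size (C : finType) (bs : seq (ballot C)) (ps : seq (option C * rat)) c :
  size bs = size ps ->
  (forall bp, bp \in zip bs ps -> bp.2.1 = Some c -> bp.2.2 <= 1) ->
  \sum_(p <- ps | p.1 == Some c) p.2 <= (count (fun p : option C * rat => p.1 == Some c) ps)%:R.
Proof.
elim: bs ps => [|b bs IH] [|p ps] //=; first by rewrite big_nil.
move=> [hs] h1; rewrite big_cons natrD.
have sub bp : bp \in zip bs ps -> bp \in (b,p) :: zip bs ps by move=> hb; rewrite in_cons hb orbT.
have IH' := IH ps hs (fun bp hb => h1 bp (sub bp hb)).
case: eqP => hp //=; last by rewrite add0r.
by apply: lerD => //; apply: (h1 (b, p) (mem_head _ _) hp).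
Qed.

Lemma zip_map_zip (A D : Type) (bs : seq A) (ps : seq D) (f : A * D -> D) :
  size bs = size ps ->
  zip bs (map f (zip bs ps)) = map (fun bp => (bp.1, f bp)) (zip bs ps).
Proof. by elim: bs ps => [|b bs IH] [|p ps] //= [] /IH ->. Qed.

Definition inv_pair (C : finType) (w : C) (E : {set C}) (bp : ballot C * (option C * rat)) : Prop :=
  (0 <= bp.2.2 <= 1) /\
  (forall c, bp.2.1 = Some c -> exists pre s, bp.1 = pre ++ c :: s /\ all (fun x => x \notin E) pre) /\
  (ohead bp.1 = Some w -> w \in E -> bp.2 = (Some w, 1)).

Lemma mono_pair (C : finType) (w : C) (E E' : {set C}) bp :
  E' \subset E -> inv_pair w E bp -> inv_pair w E' bp.
Proof.
move=> sub [h0 [h1 h2]]; split=> //; split.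
  move=> c /h1 [pre [s [hb ha]]]; exists pre, s; split=> //.
  apply/allP=> x /(allP ha) xE; apply/negP=> xE'.
  by move/negP: xE; apply; apply: (subsetP sub).
by move=> hw wE; apply: h2 => //; apply: (subsetP sub).
Qed.

Lemma move_pair (C : finType) (w : C) (E E' : {set C}) b c v v' :
  E' \subset E -> c \notin E' -> 0 <= v' <= 1 ->
  inv_pair w E (b, (Some c, v)) -> inv_pair w E' (b, (next_cand b c E', v')).
Proof.
move=> sub cE' hv [h0 [h1 h2]]; split=> //; split.
  move=> c' /= hc'.
  have [pre [s [hb ha]]] := h1 c erefl.
  exact: (next_cand_split hb ha sub cE' hc').
move=> /= hw wE'.
have := h2 hw (subsetP sub _ wE') => /= [[ec _]].
by rewrite ec wE' in cE'.
Qed.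

Lemma filter_nil_pre (C : finType) (E : {set C}) (pre : seq C) l w :
  all (fun x => x \notin E) pre -> l \in E -> w \in E ->
  [seq x <- pre | x \in [:: l; w]] = [::].
Proof.
move=> ha lE wE; elim: pre ha => [|x pre IH] //= /andP [xE /IH ->].
rewrite !inE; case: eqP => [ex|_]; first by rewrite ex lE in xE.
by case: eqP => [ex|_] //; rewrite ex wE in xE.
Qed.

Definition STVInv (C : finType) (B : seq (ballot C)) (w l : C) (st : stv_state C) : Prop :=
  size (piles st) = size B /\
  (forall bp, bp \in zip B (piles st) -> inv_pair w (eligible st) bp) /\
  (l \in seated st -> w \in seated st) /\
  (w \in elim st -> l \in elim st) /\
  (l \in elim st -> l \notin seated st).

Lemma tally_w (C : finType) (B : seq (ballot C)) (w l : C) st :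
  STVInv B w l st -> w \in eligible st -> (L_basic B w)%:R <= tally st w.
Proof.
move=> [hs [hi _]] wE; apply: count_le_sum; first by rewrite hs.
  by move=> bp /hi [/andP [] ].
move=> bp /hi [_ [_ h2]] /eqP hw; exact: h2.
Qed.

Lemma tally_l (C : finType) (B : seq (ballot C)) (w l : C) st :
  STVInv B w l st -> w \in eligible st -> l \in eligible st ->
  tally st l <= (U_comp B l w)%:R.
Proof.
move=> [hs [hi _]] wE lE; apply: sum_le_count; first by rewrite hs.
  by move=> bp /hi [/andP [] ].
move=> bp /hi [/andP [_ v1] [h1 _]] hl; split=> //.
have [pre [s [-> ha]]] := h1 l hl.
by rewrite filter_cat (filter_nil_pre ha lE wE) /= !inE eqxx.
Qed.

Lemma tally_size (C : finType) (B : seq (ballot C)) (w l : C) st c :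
  STVInv B w l st -> tally st c <= (pile_size st c)%:R.
Proof.
move=> [hs [hi _]]; apply: (@sum_le_size _ B); first by rewrite hs.
by move=> bp /hi [/andP [_ v1] _].
Qed.

Lemma elig_seat (C : finType) (B : seq (ballot C)) S st :
  eligible (seat_round B S st) = eligible st :\: quota_set B S st.
Proof.
apply/setP=> x; rewrite /eligible /= !inE.
set q := (_ <= tally st x)%R.
by case: (x \in seated st); case: (x \in elim st); case: q.
Qed.

Lemma elig_elim (C : finType) (B : seq (ballot C)) st e :
  eligible (elim_round B st e) = eligible st :\ e.
Proof.
apply/setP=> x; rewrite /eligible /= !inE.
by case: (x \in seated st); case: (x == e); case: (x \in elim st).
Qed.

Lemma elig_final (C : finType) (st : stv_state C) :
  eligible (STVState (seated st :|: eligible st) (elim st) (piles st)) = set0.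
Proof.
apply/setP=> x; rewrite /eligible /= !inE.
by case: (x \in seated st); case: (x \in elim st).
Qed.

Lemma in_elig (C : finType) (st : stv_state C) x :
  (x \in eligible st) = ~~ (x \in seated st) && ~~ (x \in elim st).
Proof. by rewrite /eligible !inE negb_or. Qed.

Lemma seat_value (C : finType) (B : seq (ballot C)) S (w l : C) st c :
  STVInv B w l st -> c \in quota_set B S st ->
  0 <= (tally st c - (quota B S)%:R) / (pile_size st c)%:R <= 1.
Proof.
move=> hI; rewrite inE => /andP [_ hq].
have ht := tally_size c hI.
apply/andP; split.
  by apply: divr_ge0; rewrite ?subr_ge0 ?ler0n.
case: (posnP (pile_size st c)) => [->|hp]; first by rewrite invr0 mulr0.
rewrite ler_pdivrMr ?ltr0n // mul1r.
apply: le_trans ht; rewrite lerBlDr lerDl ler0n //.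
Qed.

Lemma key (C : finType) (B : seq (ballot C)) (w l : C) st :
  (U_comp B l w < L_basic B w)%N ->
  STVInv B w l st -> w \in eligible st -> l \in eligible st -> tally st l < tally st w.
Proof.
move=> hlt hI wE lE.
apply: (le_lt_trans (tally_l hI wE lE)).
apply: (lt_le_trans _ (tally_w hI wE)).
by rewrite ltr_nat.
Qed.

Lemma inv_step (C : finType) (B : seq (ballot C)) S (w l : C) st st' :
  (U_comp B l w < L_basic B w)%N ->
  STVInv B w l st -> stv_step B S st st' -> STVInv B w l st'.
Proof.
move=> hlt hI hstep; case: hstep hI => {st st'} [st _ _|st _ _ _|st e _ _ _ eE hmin] hI;
  have [hs [hi [h4 [h5 h6]]]] := hI.
- split=> //=; split.
    move=> bp hbp; apply: (mono_pair (E := eligible st)); last exact: hi.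
    by rewrite elig_final sub0set.
  split; last split=> //.
    rewrite inE => /orP [/h4 hw|lE]; first by rewrite inE hw.
    rewrite inE; case ws: (w \in seated st) => //=.
    rewrite in_elig ws /=; apply/negP => /h5 le.
    by move: lE; rewrite in_elig le andbF.
  move=> le; rewrite inE negb_or (h6 le) /=.
  by rewrite in_elig le andbF.
- split.
    by rewrite /= size_map size_zip hs minnn.
  split.
    rewrite elig_seat /= zip_map_zip // => bp' /mapP [[b [[c|] v]] hbp ->] /=.
      case: ifP => cW.
        apply: move_pair; first exact: subsetDl.
          by rewrite inE cW.
          exact: seat_value hI cW.
        exact: hi hbp.
      apply: mono_pair (hi _ hbp); exact: subsetDl.
    apply: mono_pair (hi _ hbp); exact: subsetDl.
  split; last split=> //=.
    rewrite inE => /orP [/h4 hw|lW]; first by rewrite inE hw.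
    rewrite inE; case ws: (w \in seated st) => //=.
    move: (lW); rewrite inE => /andP [lE hq].
    case we: (w \in elim st).
      by move: lE; rewrite in_elig (h5 we) andbF.
    have wE : w \in eligible st by rewrite in_elig ws we.
    rewrite /quota_set inE wE /=; apply: (le_trans hq); exact: ltW (key hlt hI wE lE).
  move=> le; rewrite inE negb_or h6 //= /quota_set inE in_elig le andbF //.
- split.
    by rewrite /= size_map size_zip hs minnn.
  split.
    rewrite elig_elim /= zip_map_zip // => bp' /mapP [[b [[c|] v]] hbp ->] /=.
      case: eqP => ce.
        apply: move_pair; first exact: subsetDl.
          by rewrite !inE ce eqxx.
          by have [] := hi _ hbp.
        exact: hi hbp.
      apply: mono_pair (hi _ hbp); exact: subsetDl.
    apply: mono_pair (hi _ hbp); exact: subsetDl.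
  split=> //=; split.
    rewrite !inE => /orP [/eqP we|/h5 hl]; last by rewrite hl orbT.
    case le: (l \in elim st); first by rewrite orbT.
    case ls: (l \in seated st).
      by move: eE; rewrite -we in_elig (h4 ls).
    have lE : l \in eligible st by rewrite in_elig ls le.
    have := hmin l lE; rewrite -we => hle.
    have wE : w \in eligible st by rewrite we.
    by have := key hlt hI wE lE; rewrite ltNge hle.
  rewrite !inE => /orP [/eqP le|/h6 //].
  by move: eE; rewrite -le in_elig => /andP [].
Qed.

Lemma inv_reach (C : finType) (B : seq (ballot C)) S (w l : C) st :
  (U_comp B l w < L_basic B w)%N -> w != l ->
  stv_reachable B S st -> STVInv B w l st.
Proof.
move=> hlt wl; elim=> {st}.
- split; first by rewrite /= size_map.
  split; last by rewrite /= !inE.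
  rewrite /= -{1}(map_id B) zip_map => bp /mapP [b _ ->].
  split=> //; split.
    by move=> c /= hb; case: b hb => // x s [<-]; exists [::], s.
  by move=> /= ->.
- move=> st st' _ hI hs; exact: inv_step hlt hI hs.
Qed.

Local Close Scope ring_scope.

Theorem corollary1 (C : finType) (B : seq (ballot C)) (S : nat) (w l : C) :
  all (fun b : ballot C => uniq b) B ->
  w != l ->
  L_basic B w > U_comp B l w ->
  forall st : stv_state C, stv_reachable B S st ->
    l \in seated st -> w \in seated st.
Proof.
move=> _ wl hlt st hr.
by have [_ [_ [h4 _]]] := inv_reach hlt wl hr.
Qed.
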